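(* Let $n$ and $s$ be sufficiently large and $0<p,\varepsilon<1$. Suppose $G$ is an $n$-vertex $(\varepsilon,s)$-expander and $\varepsilon ps\ge10^5(\log n)^3$. Let $H$ be the random spanning subgraph of $G$ (with $V(H)=V(G)$) containing each edge of $G$ independently with probability $p$, and let $s'=\frac{\varepsilon ps}{10^4(\log n)^2}$. Then the probability that $H$ is not an $(\frac{\varepsilon}{4},s')$-expander is less than $2/n$.
   Context: Logarithms are base 2. For $U\subseteq V(G)$, $N_G(U)$ is the set of vertices outside $U$ with a neighbour in $U$; $G-F$ is $G$ with edge set $F$ deleted. An $n$-vertex graph $G$ is an $(\varepsilon,s)$-expander if for every $U\subseteq V(G)$, $F\subseteq E(G)$ with $1\le|U|\le\frac23n$ and $|F|\le s|U|$ we have $|N_{G-F}(U)|\ge\varepsilon|U|/(\log n)^2$. *)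

(* Defs.v *)
From HB Require Import structures.
From mathcomp Require Import all_boot all_order all_algebra.
From mathcomp Require Import boolp reals exp Rstruct.
Set Implicit Arguments. Unset Strict Implicit. Unset Printing Implicit Defensive.
Import Order.TTheory GRing.Theory Num.Theory.
Local Open Scope ring_scope.

Notation RealT := Rdefinitions.R.

Definition log2 (x : RealT) : RealT := ln x / ln 2.

(* A (simple) graph on vertex set 'I_n is given by its edge set:
   a set of 2-element subsets of 'I_n. *)
Definition simple_edges (n : nat) (E : {set {set 'I_n}}) : Prop :=
  forall e, e \in E -> #|e| = 2%N.

Definition nbhd (n : nat) (E : {set {set 'I_n}}) (U : {set 'I_n}) : {set 'I_n} :=
  [set v | (v \notin U) && [exists u in U, [set u; v] \in E]].

Definition expander (n : nat) (E : {set {set 'I_n}}) (eps s : RealT) : Prop :=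
  forall (U : {set 'I_n}) (F : {set {set 'I_n}}),
    F \subset E ->
    (1 <= #|U|)%N ->
    (#|U|%:R <= 2 / 3 * n%:R :> RealT) ->
    (#|F|%:R <= s * #|U|%:R :> RealT) ->
    eps * #|U|%:R / (log2 n%:R) ^+ 2 <= #|nbhd (E :\: F) U|%:R.

(* Probability that the random spanning subgraph H of G = ('I_n, E), keeping
   each edge independently with probability p, has edge set in the event A. *)
Definition rand_subgraph_prob (n : nat) (E : {set {set 'I_n}}) (p : RealT)
    (A : {set {set 'I_n}} -> Prop) : RealT :=
  \sum_(F : {set {set 'I_n}} | F \subset E)
     (if `[< A F >] then p ^+ #|F| * (1 - p) ^+ (#|E| - #|F|) else 0).

(* Main.v *)
Require Import Defs.
From HB Require Import structures.
From mathcomp Require Import all_boot all_order all_algebra.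
From mathcomp Require Import boolp reals exp Rstruct sequences.
From mathcomp Require Import lra zify.
Import Order.TTheory GRing.Theory Num.Theory.
Local Open Scope ring_scope.
Set Implicit Arguments. Unset Strict Implicit.

Definition Sset (n : nat) (E : {set {set 'I_n}}) (U W : {set 'I_n}) : {set {set 'I_n}} :=
  [set e in E | [exists u in U, [exists v, (v \notin U) && (v \notin W) && (e == [set u; v])]]].

Lemma Sset_sub n (E : {set {set 'I_n}}) U W : Sset E U W \subset E.
Proof. by apply/subsetP => e; rewrite inE => /andP[]. Qed.

Lemma claimA n (E F F' : {set {set 'I_n}}) (U : {set 'I_n}) :
  F' \subset F -> (#|F :&: Sset E U (nbhd (F :\: F') U)| <= #|F'|)%N.
Proof.
move=> FF; apply: subset_leq_card; apply/subsetP => e.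
rewrite !inE => /andP[eF /andP[eE /existsP[u /andP[uU /existsP[v /andP[/andP[vU vW] /eqP ev]]]]]].
apply: contraR vW => eF'; rewrite inE vU /=; apply/existsP; exists u.
by rewrite uU -ev !inE eF' eF.
Qed.

Lemma claimB n (E : {set {set 'I_n}}) (eps s : RealT) (U W : {set 'I_n}) :
  expander E eps s -> (1 <= #|U|)%N -> (#|U|%:R <= 2 / 3 * n%:R :> RealT) ->
  #|W|%:R < eps * #|U|%:R / (log2 n%:R) ^+ 2 ->
  s * #|U|%:R < #|Sset E U W|%:R.
Proof.
move=> hE h1 h2 h3; rewrite ltNge; apply/negP => h4.
have := hE U (Sset E U W) (Sset_sub E U W) h1 h2 h4.
have : (#|nbhd (E :\: Sset E U W) U| <= #|W|)%N.
  apply: subset_leq_card; apply/subsetP => v.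
  rewrite inE => /andP[vU /existsP[u /andP[uU]]].
  rewrite !inE => /andP[uvS uvE]; apply: contraR uvS => vW.
  rewrite uvE /=; apply/existsP; exists u; rewrite uU /=; apply/existsP; exists v.
  by rewrite vU vW eqxx.
rewrite -(ler_nat RealT) => h5 h6; lra.
Qed.

Definition Uf n k (f : {ffun 'I_k -> 'I_n * option 'I_n}) : {set 'I_n} :=
  [set (f i).1 | i : 'I_k].
Definition Wf n k (f : {ffun 'I_k -> 'I_n * option 'I_n}) : {set 'I_n} :=
  [set v | [exists i, (f i).2 == Some v]].

Lemma cover_f n (u0 : 'I_n) (U W : {set 'I_n}) :
  (#|W| <= #|U|)%N ->
  exists f : {ffun 'I_#|U| -> 'I_n * option 'I_n}, Uf f = U /\ Wf f = W.
Proof.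
move=> hWU.
exists [ffun i : 'I_#|U| => (nth u0 (enum U) i, nth None (map Some (enum W)) i)].
split; apply/setP => v.
- apply/imsetP/idP.
  + move=> [i _ ->]; rewrite ffunE /=; rewrite -mem_enum; apply: mem_nth.
    by rewrite -cardE.
  + move=> vU; have hi : (index v (enum U) < #|U|)%N by rewrite cardE index_mem mem_enum.
    by exists (Ordinal hi) => //; rewrite ffunE /= nth_index // mem_enum.
- rewrite inE; apply/existsP/idP.
  + move=> [i]; rewrite ffunE /=.
    case: (ltnP i (size (enum W))) => hi.
      by rewrite (nth_map v) // => /eqP [<-]; rewrite -mem_enum mem_nth.
    by rewrite nth_default // size_map.
  + move=> vW; have hi : (index v (enum W) < #|U|)%N.
      by apply: leq_trans hWU; rewrite cardE index_mem mem_enum.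
    exists (Ordinal hi); rewrite ffunE /= (nth_map v) ?nth_index ?mem_enum //.
    by rewrite index_mem mem_enum.
Qed.
Lemma weight_gen (n : nat) (E S : {set {set 'I_n}}) (p x : RealT) :
  S \subset E ->
  \sum_(F : {set {set 'I_n}} | F \subset E)
     p ^+ #|F| * (1 - p) ^+ (#|E| - #|F|) * x ^+ #|F :&: S|
  = (1 - p + p * x) ^+ #|S|.
Proof.
move=> SE.
pose Fi := fun i : {set 'I_n} => if i \in E then p * (if i \in S then x else 1) else 0.
pose Gi := fun i : {set 'I_n} => if i \in E then 1 - p else 1.
have H := (@bigA_distr RealT 0 1 *%R +%R _ Fi Gi).
have L : \prod_i (Fi i + Gi i) = (1 - p + p * x) ^+ #|S|.
  rewrite -prodr_const [RHS]big_mkcond /=; apply: eq_bigr => i _.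
  rewrite /Fi /Gi; case: ifP => iE; case: ifP => iS //=; try lra.
  by rewrite (subsetP SE i iS) in iE.
rewrite -L /= H.
set G := (fun J : {set {set 'I_n}} => \prod_i (if i \in J then Fi i else Gi i)).
have -> : \big[+%R/0]_(J in {set {set 'I_n}}) G J = \sum_J G J by apply: eq_bigl.
rewrite big_mkcond /=; apply: eq_bigr => J _; rewrite /G.
case: ifP => JE; last first.
  move/negbT: JE => /subsetPn [i iJ iE].
  by rewrite (bigD1 i) //= iJ /Fi (negPf iE) mul0r.

rewrite (bigID (fun i => i \in J)) /=.
rewrite (eq_bigr (fun i => p * (if i \in S then x else 1))); last first.
  by move=> i iJ; rewrite iJ /Fi (subsetP JE i iJ).
rewrite [X in _ = _ * X](eq_bigr (fun i => if i \in E then 1 - p else 1)); last first.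
  by move=> i /negPf ->.
rewrite big_split /= prodr_const.
rewrite -!big_mkcondr /=.
rewrite !prodr_const.
have -> : #|[pred i in J | i \in S]| = #|J :&: S|.
  by apply: eq_card => i; rewrite !inE.
have cD : #|E :\: J| = (#|E| - #|J|)%N by rewrite cardsD (setIidPr JE).
have -> : #|(fun i : {set 'I_n} => (i \notin J) && (i \in E))| = (#|E| - #|J|)%N.
  rewrite -cD; apply: eq_card => i; rewrite [RHS]inE [LHS]unfold_in. reflexivity.
by rewrite -!mulrA [X in _ * X]mulrC. Qed.

Lemma expRm1_le : expR (-1) <= 1 / 2 :> RealT.
Proof.
have h := expR_ge1Dx (1 : RealT).
have h0 := expR_gt0 (1 : RealT).
rewrite expRN ler_pdivlMr ?ler_pdivrMl //; lra.
Qed.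

Lemma term_bound n (E S : {set {set 'I_n}}) (p t : RealT) :
  S \subset E -> 0 < p -> p < 1 ->
  \sum_(F : {set {set 'I_n}} | F \subset E)
     (p ^+ #|F| * (1 - p) ^+ (#|E| - #|F|)) * (expR t * expR (-1) ^+ #|F :&: S|)
  <= expR (t - p * #|S|%:R / 2).
Proof.
move=> SE p0 p1.
rewrite (eq_bigr (fun F : {set {set 'I_n}} => expR t * (p ^+ #|F| * (1 - p) ^+ (#|E| - #|F|) * expR (-1) ^+ #|F :&: S|))); last first.
  by move=> F _; rewrite mulrCA mulrA.
rewrite -mulr_sumr weight_gen // exp.expRD ler_pM2l ?expR_gt0 //.
have e1 := expRm1_le; have e0 := expR_gt0 (-1 : RealT).
rewrite (_ : - (p * #|S|%:R / 2) = #|S|%:R * (- (p / 2))); last by rewrite mulrC; lra.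
rewrite expRM_natl; apply: lerXn2r; rewrite ?nnegrE; try nra.
  exact: expR_ge0.
have := expR_ge1Dx (- (p / 2)); nra.
Qed.

Lemma prob_le n (E : {set {set 'I_n}}) (p : RealT) (A : {set {set 'I_n}} -> Prop)
  (g : {set {set 'I_n}} -> RealT) :
  0 < p -> p < 1 -> (forall F : {set {set 'I_n}}, F \subset E -> 0 <= g F) ->
  (forall F : {set {set 'I_n}}, F \subset E -> A F -> 1 <= g F) ->
  rand_subgraph_prob E p A <=
  \sum_(F : {set {set 'I_n}} | F \subset E) (p ^+ #|F| * (1 - p) ^+ (#|E| - #|F|)) * g F.
Proof.
move=> p0 p1 g0 g1; apply: ler_sum => F FE.
have w0 : 0 <= p ^+ #|F| * (1 - p) ^+ (#|E| - #|F|).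
  by apply: mulr_ge0; apply: exprn_ge0; lra.
case: asboolP => hA.
  by rewrite -{1}(mulr1 (_ * _)); apply: ler_wpM2l => //; apply: g1.
by apply: mulr_ge0 => //; apply: g0.
Qed.
Lemma ln2_pos : 0 < ln (2 : RealT).
Proof. by apply: ln_gt0; lra. Qed.

Lemma L_ge1 n : (2 <= n)%N -> 1 <= log2 n%:R.
Proof.
move=> n2; rewrite /log2 ler_pdivlMr ?ln2_pos // mul1r.
have nR : (2 : RealT) <= n%:R by rewrite (ler_nat RealT 2 n).
rewrite ler_ln // posrE; lra.
Qed.

Lemma lnn_le n : (2 <= n)%N -> ln (n%:R : RealT) <= 2 * log2 n%:R.
Proof.
move=> n2; have h := ln2_pos.
have h2 : ln (2 : RealT) < 2 by apply: ln_sublinear; lra.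
have hL : ln (n%:R : RealT) = log2 n%:R * ln 2.
  by rewrite /log2 mulrVK // unitfE; lra.
have := L_ge1 n2; rewrite hL; nra.
Qed.

Lemma final_num n (p s : RealT) : (2 <= n)%N ->
  10%:R ^+ 5 * (log2 n%:R) ^+ 3 <= p * s ->
  (n * n.+1)%:R * expR (- (p * s / 4)) <= 1 / (n%:R ^+ 2).
Proof.
move=> n2 hps.
have L1 := L_ge1 n2; have hl := lnn_le n2.
set L := log2 n%:R in L1 hl hps.
have nR : (2 : RealT) <= n%:R by rewrite (ler_nat RealT 2 n).
have n0 : (0 : RealT) < n%:R by lra.
have e5 : n%:R ^+ 5 <= expR (p * s / 4).
  have -> : n%:R ^+ 5 = expR (ln (n%:R : RealT) * 5%:R).
    by rewrite mulr_natr -lnXn // lnK // posrE exprn_gt0.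
  rewrite ler_expR.
  have L3 : L <= L ^+ 3.
    rewrite !exprS expr0 mulr1; have : 1 <= L * L by nra. nra.
  have c40 : (40 : RealT) <= 10%:R ^+ 5 by rewrite -natrX ler_nat.
  have L0 : 0 <= L ^+ 3 by apply: exprn_ge0; lra.
  have : 40 * L ^+ 3 <= p * s by apply: le_trans hps; apply: ler_wpM2r.
  lra.
have hnat : (n * n.+1 * n ^ 2 <= n ^ 5)%N.
  have : (n.+1 <= n * n)%N by nia.
  move=> h; rewrite !expnS expn0 muln1; nia.
have hR : (n * n.+1)%:R * n%:R ^+ 2 <= n%:R ^+ 5 :> RealT.
  by rewrite -natrX -natrM -natrX ler_nat.
rewrite ler_pdivlMr ?exprn_gt0 // mulrAC expRN.
rewrite ler_pdivrMr ?expR_gt0 // mul1r; exact: le_trans hR e5.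
Qed.

Lemma key_ineq (m : RealT) : 2 <= m -> (m + 1) * (1 / m ^+ 2) < 2 / m.
Proof.
move=> m2.
have m0 : m != 0 by rewrite gt_eqF //; lra.
have zn : m^-1 * m = 1 by rewrite mulVf.
have z0 : 0 < m^-1 by rewrite invr_gt0; lra.
rewrite expr2 mul1r invfM.
set z := m^-1 in zn z0 *.
have e : m * (z * z) = z by rewrite mulrA (mulrC m) zn mul1r.
have z1 : z <= 1 / 2 by nra.
rewrite mulrDl e mul1r; nra.
Qed.

Lemma fin_ineq n : (2 <= n)%N -> \sum_(k < n.+1) (1 / n%:R ^+ 2 : RealT) < 2 / n%:R.
Proof.
move=> n2; rewrite sumr_const card_ord -[X in X < _]mulr_natl -addn1 natrD.
apply: key_ineq; by rewrite (ler_nat RealT 2 n).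
Qed.
Theorem mainTheorem17 :
  exists (n0 : nat) (s0 : RealT),
  forall (n : nat) (s p eps : RealT) (E : {set {set 'I_n}}),
    (n0 <= n)%N -> s0 <= s ->
    0 < p -> p < 1 -> 0 < eps -> eps < 1 ->
    simple_edges E ->
    expander E eps s ->
    10%:R ^+ 5 * (log2 n%:R) ^+ 3 <= eps * p * s ->
    rand_subgraph_prob E p
      (fun F => ~ expander F (eps / 4)
                   (eps * p * s / (10%:R ^+ 4 * (log2 n%:R) ^+ 2)))
    < 2 / n%:R.
Proof.
exists 2%N, 0 => n s p eps E n2 _ p0 p1 e0 e1 _ hE hb.
have L1 := L_ge1 n2.
set L := log2 n%:R in L1 hb *.
set t := eps * p * s / (10%:R ^+ 4 * L ^+ 2).
have nR : (2 : RealT) <= n%:R by rewrite (ler_nat RealT 2 n).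
have L3 : 0 < L ^+ 3 by apply: exprn_gt0; lra.
have L2 : 1 <= L ^+ 2 by rewrite expr2; nra.
have c5 : (1 : RealT) <= 10%:R ^+ 5 by rewrite -natrX ler1n.
have c4 : (4 : RealT) <= 10%:R ^+ 4 by rewrite -natrX ler_nat.
have eps_p : 0 < eps * p by apply: mulr_gt0.
have eps_ps : 0 < eps * p * s.
  apply: lt_le_trans hb; apply: mulr_gt0 => //; lra.
have s0 : 0 < s by rewrite pmulr_rgt0 // in eps_ps.
have ps0 : 0 < p * s by apply: mulr_gt0.
have hps : 10%:R ^+ 5 * L ^+ 3 <= p * s.
  apply: le_trans hb _; rewrite -mulrA; nra.
have t0 : 0 <= t.
  by apply: divr_ge0; [lra | apply: mulr_ge0; lra].
have tps : t <= p * s / 4.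
  rewrite /t ler_pdivrMr; last by apply: mulr_gt0; lra.
  have D4 : 4 <= 10%:R ^+ 4 * L ^+ 2 by nra.
  have h1 : eps * p * s <= p * s by rewrite -mulrA; nra.
  have h2 : p * s <= p * s / 4 * (10%:R ^+ 4 * L ^+ 2) by nra.
  lra.
pose cond := fun k (f : {ffun 'I_k -> 'I_n * option 'I_n}) =>
  [&& #|Uf f| == k, (0 < k)%N, (k%:R <= 2 / 3 * n%:R :> RealT) &
      (#|Wf f|%:R < eps / 4 * k%:R / L ^+ 2 :> RealT)].
pose h := fun k (f : {ffun 'I_k -> 'I_n * option 'I_n}) (F : {set {set 'I_n}}) =>
  if cond k f then expR (t * k%:R) * expR (-1) ^+ #|F :&: Sset E (Uf f) (Wf f)| else 0.
pose g := fun F : {set {set 'I_n}} =>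
  \sum_(k < n.+1) \sum_(f : {ffun 'I_k -> 'I_n * option 'I_n}) h k f F.
have hge0 : forall k f F, 0 <= h k f F.
  move=> k f F; rewrite /h; case: ifP => // _.
  by apply: mulr_ge0; [apply: expR_ge0 | apply: exprn_ge0; apply: expR_ge0].
have gge0 : forall F, 0 <= g F.
  by move=> F; apply: sumr_ge0 => k _; apply: sumr_ge0 => f _.
apply: (le_lt_trans (prob_le (g := g) p0 p1 (fun F _ => gge0 F) _)).
  move=> F FE hne.
  have [U [F' [hF' [h1 [h2 [h3 h4]]]]]] : exists (U : {set 'I_n}) (F' : {set {set 'I_n}}), F' \subset F /\ (1 <= #|U|)%N /\
      (#|U|%:R <= 2 / 3 * n%:R :> RealT) /\ (#|F'|%:R <= t * #|U|%:R) /\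
      #|nbhd (F :\: F') U|%:R < eps / 4 * #|U|%:R / L ^+ 2.
    apply: contrapT => hn; apply: hne => U F' a b c d; rewrite leNgt; apply/negP => e.
    by apply: hn; exists U, F'.
  set W := nbhd (F :\: F') U in h4.
  have hWk : (#|W| <= #|U|)%N.
    apply: ltnW; rewrite -(ltr_nat RealT); apply: lt_le_trans h4 _.
    rewrite ler_pdivrMr; last lra.
    have : (0 : RealT) <= #|U|%:R by [].
    nra.
  have n0 : (0 < n)%N by apply: leq_trans n2.
  have [f [hU hW]] := cover_f (Ordinal n0) hWk.
  have hk : (#|U| < n.+1)%N.
    by rewrite ltnS; apply: leq_trans (max_card _) _; rewrite card_ord.
  rewrite /g (bigD1 (Ordinal hk)) //= (bigD1 f) //=.
  have r1 : 0 <= \sum_(j < n.+1 | j != Ordinal hk) \sum_(f0 : {ffun 'I_j -> 'I_n * option 'I_n}) h j f0 F.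
    by apply: sumr_ge0 => k _; apply: sumr_ge0 => f0 _.
  have r2 : 0 <= \sum_(f0 : {ffun 'I_#|U| -> 'I_n * option 'I_n} | f0 != f) h #|U| f0 F.
    by apply: sumr_ge0 => f0 _.
  suff : 1 <= h #|U| f F by lra.
  rewrite /h /cond hU hW eqxx h1 h2 h4 /=.
  have hX := claimA E U hF'.
  rewrite -(ler_nat RealT) in hX.
  rewrite -expRM_natl -exp.expRD.
  set y := (X in expR X).
  have hy0 : 0 <= y by rewrite /y; lra.
  have := expR_ge1Dx y; lra.
pose w := fun F : {set {set 'I_n}} => p ^+ #|F| * (1 - p) ^+ (#|E| - #|F|).
rewrite -/w.
have -> : \sum_(F : {set {set 'I_n}} | F \subset E) w F * g F =
    \sum_(k < n.+1) \sum_(f : {ffun 'I_k -> 'I_n * option 'I_n})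
       \sum_(F : {set {set 'I_n}} | F \subset E) w F * h k f F.
  rewrite /g; under eq_bigr => F _ do rewrite mulr_sumr.
  rewrite exchange_big; apply: eq_bigr => k _.
  under eq_bigr => F _ do rewrite mulr_sumr.
  by rewrite exchange_big.
set y := expR (- (p * s / 4)).
have y0 : 0 <= y by apply: expR_ge0.
have hy := final_num n2 hps.
rewrite -/y in hy.
have term : forall k (f : {ffun 'I_k -> 'I_n * option 'I_n}),
    \sum_(F : {set {set 'I_n}} | F \subset E) w F * h k f F <= if (0 < k)%N then y ^+ k else 0.
  move=> k f; case hc: (cond k f); last first.
    rewrite big1; last by move=> F _; rewrite /h hc mulr0.
    by case: ifP => _ //; apply: exprn_ge0.
  rewrite /h hc.
  move: hc => /and4P [/eqP hU k0 hk2 hW]; rewrite k0.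
  apply: le_trans (term_bound (t * k%:R) (Sset_sub E (Uf f) (Wf f)) p0 p1) _.
  rewrite /y -expRM_natl ler_expR.
  have hS : s * #|Uf f|%:R < #|Sset E (Uf f) (Wf f)|%:R.
    apply: claimB hE _ _ _; rewrite hU //.
    apply: lt_le_trans hW _.
    rewrite ler_pdivrMr ?exprn_gt0 //; last lra.
    rewrite -/L divfK; last by rewrite gt_eqF //; lra.
    have : (0 : RealT) <= k%:R by [].
    nra.
  rewrite hU in hS.
  have kk : (0 : RealT) <= k%:R by [].
  have a : t * k%:R <= p * s / 4 * k%:R by apply: ler_wpM2r.
  have b : p * (s * k%:R) <= p * #|Sset E (Uf f) (Wf f)|%:R.
    by apply: ler_wpM2l; lra.
  lra.
apply: (@le_lt_trans _ _ (\sum_(k < n.+1) (1 / n%:R ^+ 2))).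
  apply: ler_sum => k _.
  apply: le_trans (_ : _ <= \sum_(f : {ffun 'I_k -> 'I_n * option 'I_n})
                             (if (0 < k)%N then y ^+ k else 0)) _.
    by apply: ler_sum => f _; apply: term.
  rewrite sumr_const card_ffun card_prod card_option !card_ord.
  case: ifP => k0; last by rewrite mul0rn; apply: divr_ge0; [lra | apply: exprn_ge0; lra].
  rewrite -[X in X <= _]mulr_natl natrX -exprMn.
  have a0 : 0 <= (n * n.+1)%:R * y by apply: mulr_ge0.
  have a1 : (n * n.+1)%:R * y <= 1.
    apply: le_trans (hy) _; rewrite ler_pdivrMr ?exprn_gt0 //; last lra.
    rewrite mul1r expr2; nra.
  apply: le_trans (hy).
  case: (k : nat) k0 => // k' _.
  rewrite exprS -[X in _ <= X]mulr1; apply: ler_wpM2l => //.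
  exact: exprn_ile1.
exact: fin_ineq.
Qed.
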